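(* The minimum size of advice permitting the agent to explore every $n$-node graph in time polynomial in $n$ is $\log\log\log n-\Theta(1)$, both for instance oracles and for map oracles. Precisely: (i) for every constant $c>0$ there are a map oracle with advice size at most $\lfloor\log\log\log n-c\rfloor$ and a deterministic algorithm exploring every $n$-node graph from every starting node in time polynomial in $n$; (ii) for every function $\phi:\mathbb{N}\to\mathbb{N}$ with $\phi(n)\to\infty$, no instance oracle (hence no map oracle) with advice size at most $\log\log\log n-\phi(n)$, together with any deterministic algorithm, explores all $n$-node graphs in time polynomial in $n$.
   Context: Model: a graph is a simple connected undirected graph with $n$ nodes. Nodes are unlabeled; at each node of degree $d$ the incident edges carry distinct port numbers $0,\dots,d-1$, arbitrarily assigned. A mobile agent starts at some node. At each step, located at a node $u$ whose degree it knows, it chooses a port at $u$ and traverses the corresponding edge to a neighbor $w$; upon arrival it learns the port number of this edge at $w$ and the degree of $w$. The agent must visit all nodes and stop; the time of exploration is the number of edge traversals. A deterministic exploration algorithm receives as input a binary string (advice); the size of advice is its length. A map oracle is a function $f$ assigning a binary string $f(G)$ to each port-numbered graph $G$; an instance oracle assigns a binary string $f(G,v)$ to each pair $(G,v)$ with $v$ the starting node. Logarithms are to base 2. *)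

(* Defs.v *)
From Stdlib Require Import Reals ZArith Arith List Relations.
Import ListNotations.

(** Nodes are 0..pg_n-1 (labels are invisible to the
    agent).  [pg_deg u] is the degree of u; [pg_nbr u p = (w, q)] means port p
    at u leads to w, where the same edge has port q. *)
Record pgraph := PGraph {
  pg_n   : nat;
  pg_deg : nat -> nat;
  pg_nbr : nat -> nat -> nat * nat
}.

Definition adj (G : pgraph) (u w : nat) : Prop :=
  exists p, p < pg_deg G u /\ fst (pg_nbr G u p) = w.

Definition wf_graph (G : pgraph) : Prop :=
  1 <= pg_n G /\
  (forall u p, u < pg_n G -> p < pg_deg G u ->
     let (w, q) := pg_nbr G u p in
     w < pg_n G /\ q < pg_deg G w /\ pg_nbr G w q = (u, p) /\ w <> u) /\
  (forall u p1 p2, u < pg_n G -> p1 < pg_deg G u -> p2 < pg_deg G u ->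
     fst (pg_nbr G u p1) = fst (pg_nbr G u p2) -> p1 = p2) /\
  (forall u w, u < pg_n G -> w < pg_n G -> clos_refl_trans nat (adj G) u w).

(** An agent history: list of (port taken, entry port at arrival, degree of
    the node reached), in chronological order. *)
Definition history := list (nat * nat * nat).

(** A deterministic exploration algorithm: given the advice, the degree of the
    starting node and the history so far, it either stops ([None]) or takes
    port p ([Some p]). *)
Definition algorithm := list bool -> nat -> history -> option nat.

Fixpoint cfg (G : pgraph) (A : algorithm) (adv : list bool) (v : nat) (k : nat)
  : nat * history :=
  match k with
  | O => (v, [])
  | S k' =>
    let (u, h) := cfg G A adv v k' in
    match A adv (pg_deg G v) h with
    | Some p =>
        if p <? pg_deg G u then
          let (w, q) := pg_nbr G u p in (w, h ++ [(p, q, pg_deg G w)])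
        else (u, h)
    | None => (u, h)
    end
  end.

Definition explores_within (G : pgraph) (A : algorithm) (adv : list bool)
  (v : nat) (T : nat) : Prop :=
  exists t, t <= T /\
    (forall i, i < t -> exists p,
        A adv (pg_deg G v) (snd (cfg G A adv v i)) = Some p /\
        p < pg_deg G (fst (cfg G A adv v i))) /\
    A adv (pg_deg G v) (snd (cfg G A adv v t)) = None /\
    (forall u, u < pg_n G -> exists i, i <= t /\ fst (cfg G A adv v i) = u).

Definition map_oracle := pgraph -> list bool.
Definition instance_oracle := pgraph -> nat -> list bool.

Definition poly_explores_map (f : map_oracle) (A : algorithm) : Prop :=
  exists C k : nat, forall G v, wf_graph G -> v < pg_n G ->
    explores_within G A (f G) v (C * pg_n G ^ k).

Definition poly_explores_inst (f : instance_oracle) (A : algorithm) : Prop :=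
  exists C k : nat, forall G v, wf_graph G -> v < pg_n G ->
    explores_within G A (f G v) v (C * pg_n G ^ k).

Definition lg (x : R) : R := ln x / ln 2.
Definition lll (n : nat) : R := lg (lg (lg (INR n))).

Definition floorR (x : R) : Z := Int_part x.

Definition tends_to_infty (phi : nat -> nat) : Prop :=
  forall M, exists N, forall n, N <= n -> M <= phi n.

(* Main.v *)
Require Import Defs.
From Stdlib Require Import Reals ZArith Arith List Lia Lra Permutation ClassicalEpsilon Classical Relations.
Import ListNotations.

Section Chunk1.

Lemma php : forall n m (f : nat -> nat), (forall i, i < m -> f i < n) -> n < m ->
  exists i j, i < j < m /\ f i = f j.
Proof.
  induction n as [|n IH]; intros m f Hf Hm.
  - specialize (Hf 0 ltac:(lia)). lia.
  - destruct (classic (exists i, i < m - 1 /\ f i = f (m - 1))) as [[i [Hi Hfi]]|Hno].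
    + exists i, (m - 1). split; [lia|auto].
    + set (a := f (m-1)).
      set (g := fun i => if f i <? a then f i else f i - 1).
      assert (Hg : forall i, i < m - 1 -> g i < n).
      { intros i Hi. unfold g. assert (Ha: a < S n) by (apply Hf; lia).
        assert (f i <> a) by (intro; apply Hno; eauto).
        specialize (Hf i ltac:(lia)).
        destruct (Nat.ltb_spec (f i) a); lia. }
      destruct (IH (m-1) g Hg ltac:(lia)) as [i [j [Hij Heq]]].
      exists i, j. split; [lia|].
      assert (f i <> a) by (intro; apply Hno; exists i; split; [lia|auto]).
      assert (f j <> a) by (intro; apply Hno; exists j; split; [lia|auto]).
      unfold g in Heq. destruct (Nat.ltb_spec (f i) a); destruct (Nat.ltb_spec (f j) a); lia.
Qed.

Lemma inj_bound : forall d n (f : nat -> nat), (forall i, i < d -> f i < n) ->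
  (forall i j, i < d -> j < d -> f i = f j -> i = j) -> d <= n.
Proof.
  intros d n f Hf Hi. destruct (le_lt_dec d n) as [|H]; auto.
  destruct (php n d f Hf H) as [i [j [Hij Heq]]]. specialize (Hi i j ltac:(lia) ltac:(lia) Heq). lia.
Qed.

Lemma cover_bound : forall n t (f : nat -> nat),
  (forall u, u < n -> exists i, i <= t /\ f i = u) -> n <= S t.
Proof.
  intros n t f H.
  assert (H' : forall u, exists i, u < n -> i <= t /\ f i = u).
  { intro u. destruct (lt_dec u n) as [Hu|Hu].
    - destruct (H u Hu) as [i Hi]. exists i. auto.
    - exists 0. intro. lia. }
  set (g := fun u => proj1_sig (constructive_indefinite_description _ (H' u))).
  assert (Hg : forall u, u < n -> g u <= t /\ f (g u) = u).
  { intros u Hu. unfold g. destruct (constructive_indefinite_description _ (H' u)) as [i Hi]. simpl. auto. }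
  apply (inj_bound n (S t) g).
  - intros i Hi. destruct (Hg i Hi). lia.
  - intros i j Hi Hj E. destruct (Hg i Hi) as [_ A]. destruct (Hg j Hj) as [_ B]. congruence.
Qed.

Fixpoint sumR (n : nat) (f : nat -> R) : R :=
  match n with O => 0%R | S k => (sumR k f + f k)%R end.

Local Open Scope R_scope.

Lemma sumR_ext : forall n f g, (forall i, (i < n)%nat -> f i = g i) -> sumR n f = sumR n g.
Proof. induction n; intros; simpl; auto. rewrite IHn with (g:=g). rewrite H; auto. intros; apply H; lia. Qed.

Lemma sumR_plus : forall n f g, sumR n (fun i => f i + g i) = sumR n f + sumR n g.
Proof. induction n; intros; simpl; [lra|]. rewrite IHn. lra. Qed.

Lemma sumR_scal : forall n c f, sumR n (fun i => c * f i) = c * sumR n f.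
Proof. induction n; intros; simpl; [lra|]. rewrite IHn. lra. Qed.

Lemma sumR_scal_r : forall n c f, sumR n (fun i => f i * c) = sumR n f * c.
Proof. induction n; intros; simpl; [lra|]. rewrite IHn. lra. Qed.

Lemma sumR_le : forall n f g, (forall i, (i < n)%nat -> f i <= g i) -> sumR n f <= sumR n g.
Proof. induction n; intros; simpl; [lra|]. apply Rplus_le_compat; [apply IHn|apply H]; intros; try apply H; lia. Qed.

Lemma sumR_nonneg : forall n f, (forall i, (i < n)%nat -> 0 <= f i) -> 0 <= sumR n f.
Proof. intros. replace 0 with (sumR n (fun _ => 0)). apply sumR_le; auto.
  induction n; simpl; auto. rewrite IHn; [lra|]. intros; apply H; lia. Qed.

Lemma sumR_const : forall n c, sumR n (fun _ => c) = INR n * c.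
Proof. induction n; intros; simpl sumR; [simpl; lra|]. rewrite IHn, S_INR. lra. Qed.

Lemma sumR_term : forall n f i, (forall j, (j < n)%nat -> 0 <= f j) -> (i < n)%nat -> f i <= sumR n f.
Proof.
  induction n; intros f i H Hi; [lia|]. simpl.
  destruct (Nat.eq_dec i n).
  - subst. assert (0 <= sumR n f) by (apply sumR_nonneg; intros; apply H; lia). lra.
  - assert (f i <= sumR n f) by (apply IHn; [intros; apply H|]; lia). assert (0 <= f n) by (apply H; lia). lra.
Qed.

Lemma sumR_shift : forall n f, sumR (S n) f = f O + sumR n (fun i => f (S i)).
Proof. induction n; intros; simpl in *; [lra|]. rewrite IHn. lra. Qed.

Lemma sumR_split : forall a b f, sumR (a + b) f = sumR a f + sumR b (fun i => f (a + i)%nat).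
Proof. intros a b. induction b; intros; simpl; [rewrite Nat.add_0_r; lra|].
  rewrite Nat.add_succ_r. simpl. rewrite IHb. lra. Qed.

Lemma sumR_except : forall n w f, (w < n)%nat ->
  sumR n (fun x => if Nat.eq_dec x w then 0 else f x) = sumR n f - f w.
Proof.
  induction n; intros; [lia|]. simpl. destruct (Nat.eq_dec n w).
  - subst. assert (E: sumR w (fun x => if Nat.eq_dec x w then 0 else f x) = sumR w f).
    { apply sumR_ext. intros. destruct (Nat.eq_dec i w); auto; lia. }
    rewrite E. destruct (Nat.eq_dec w w); [lra|congruence].
  - rewrite IHn; [lra|lia].
Qed.

Lemma sumR_swap : forall n m (F : nat -> nat -> R),
  sumR n (fun i => sumR m (fun j => F i j)) = sumR m (fun j => sumR n (fun i => F i j)).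
Proof.
  induction n; intros; simpl.
  - rewrite sumR_const. lra.
  - rewrite IHn. rewrite <- sumR_plus. auto.
Qed.

Lemma sumR_mod : forall d m g, (d > 0)%nat ->
  sumR (d * m) (fun r => g (r mod d)%nat) = INR m * sumR d g.
Proof.
  intros d m g Hd. induction m.
  - rewrite Nat.mul_0_r. simpl. lra.
  - replace (d * S m)%nat with (d * m + d)%nat by lia. rewrite sumR_split, IHm, S_INR.
    assert (E: sumR d (fun i => g ((d * m + i) mod d)%nat) = sumR d g).
    { apply sumR_ext. intros i Hi. f_equal. rewrite Nat.add_comm, Nat.mul_comm, Nat.Div0.mod_add. apply Nat.mod_small; auto. }
    rewrite E. lra.
Qed.

Lemma Rdiv_nonneg : forall a b, 0 <= a -> 0 < b -> 0 <= a / b.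
Proof. intros. unfold Rdiv. apply Rmult_le_pos; auto. left; apply Rinv_0_lt_compat; auto. Qed.

Definition avg (d : nat) (g : nat -> R) : R := sumR d g / INR d.

Lemma avg_mul : forall d g, INR d * avg d g = sumR d g.
Proof. intros. unfold avg. destruct d. simpl. lra. field. apply not_0_INR. lia. Qed.

Lemma avg_le : forall d f g, (forall i, (i < d)%nat -> f i <= g i) -> avg d f <= avg d g.
Proof. intros. unfold avg. destruct d. simpl. unfold Rdiv. rewrite Rinv_0. lra.
  apply Rmult_le_compat_r. left. apply Rinv_0_lt_compat. apply lt_0_INR. lia. apply sumR_le; auto. Qed.

Lemma avg_bounds : forall d g, (forall i, (i < d)%nat -> 0 <= g i <= 1) -> 0 <= avg d g <= 1.
Proof. intros. unfold avg. destruct d. simpl. unfold Rdiv. rewrite Rinv_0. lra.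
  assert (0 < INR (S d)) by (apply lt_0_INR; lia).
  split. apply Rdiv_nonneg; auto. apply sumR_nonneg. intros; apply H; auto.
  apply Rmult_le_reg_r with (INR (S d)); auto. unfold Rdiv. rewrite Rmult_assoc, Rinv_l, Rmult_1_r, Rmult_1_l by lra.
  rewrite <- (Rmult_1_r (INR (S d))), <- sumR_const. apply sumR_le. intros; apply H; auto.
Qed.

Lemma avg_scal_r : forall d g c, avg d (fun i => g i * c) = avg d g * c.
Proof. intros. unfold avg. rewrite sumR_scal_r. unfold Rdiv. ring. Qed.

Lemma avg_plus_const : forall d g c, 0 <= c -> avg d (fun i => g i + c) <= avg d g + c.
Proof. intros. unfold avg. destruct d. simpl. unfold Rdiv. rewrite Rinv_0. lra.
  rewrite sumR_plus, sumR_const. right. field. apply not_0_INR. lia. Qed.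

Lemma avg_nonneg : forall d g, (forall i, (i < d)%nat -> 0 <= g i) -> 0 <= avg d g.
Proof. intros. unfold avg. destruct d. simpl. unfold Rdiv. rewrite Rinv_0. lra.
  apply Rdiv_nonneg. apply sumR_nonneg; auto. apply lt_0_INR; lia. Qed.

Definition sumL {A} (l : list A) (f : A -> R) : R := fold_right (fun a s => f a + s) 0 l.

Lemma sumL_app : forall A (l1 l2 : list A) f, sumL (l1 ++ l2) f = sumL l1 f + sumL l2 f.
Proof. induction l1; intros; simpl; [lra|]. unfold sumL in *. simpl. rewrite IHl1. lra. Qed.

Lemma sumL_map : forall A B (l : list A) (h : A -> B) f, sumL (map h l) f = sumL l (fun a => f (h a)).
Proof. induction l; intros; simpl; auto. unfold sumL in *; simpl. rewrite IHl. auto. Qed.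

Lemma sumL_perm : forall A (l1 l2 : list A) f, Permutation l1 l2 -> sumL l1 f = sumL l2 f.
Proof. intros. induction H; unfold sumL in *; simpl; lra. Qed.

Lemma sumL_seq : forall n f, sumL (seq 0 n) f = sumR n f.
Proof.
  induction n; intros; auto. rewrite seq_S, sumL_app, IHn. simpl. unfold sumL; simpl. lra.
Qed.

Lemma sumL_ext : forall A (l : list A) f g, (forall a, In a l -> f a = g a) -> sumL l f = sumL l g.
Proof. induction l; intros; simpl; auto. unfold sumL in *; simpl. rewrite H by (simpl; auto). rewrite (IHl f g); auto. intros; apply H; simpl; auto. Qed.

Lemma sumL_le : forall A (l : list A) f g, (forall a, In a l -> f a <= g a) -> sumL l f <= sumL l g.
Proof. induction l; intros; unfold sumL; simpl. lra. apply Rplus_le_compat. apply H; simpl; auto. apply IHl. intros; apply H; simpl; auto. Qed.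

Lemma sumL_const : forall A (l : list A) c, sumL l (fun _ => c) = INR (length l) * c.
Proof. induction l; intros; unfold sumL in *; simpl length; [simpl; lra|]. simpl fold_right. rewrite IHl, S_INR. lra. Qed.

Lemma sumL_nonneg : forall A (l : list A) f, (forall a, In a l -> 0 <= f a) -> 0 <= sumL l f.
Proof. induction l; intros; unfold sumL in *; simpl. lra. assert (0 <= f a) by (apply H; simpl; auto).
  assert (0 <= fold_right (fun a0 s => f a0 + s) 0 l) by (apply IHl; intros; apply H; simpl; auto). lra. Qed.

Lemma sumL_sumR_swap : forall A (l : list A) n (F : A -> nat -> R),
  sumL l (fun a => sumR n (F a)) = sumR n (fun r => sumL l (fun a => F a r)).
Proof. induction l; intros; unfold sumL in *; simpl. rewrite sumR_const; lra.
  rewrite IHl. rewrite <- sumR_plus. auto. Qed.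

Lemma sumL_flat_map : forall A B (l : list A) (g : A -> list B) f,
  sumL (flat_map g l) f = sumL l (fun a => sumL (g a) f).
Proof. induction l; intros; simpl; auto. rewrite sumL_app, IHl. unfold sumL; simpl; auto. Qed.

Lemma sumL_filter : forall A (l : list A) (b : A -> bool) f,
  sumL (filter b l) f = sumL l (fun a => if b a then f a else 0).
Proof. induction l; intros; simpl; auto. destruct (b a); unfold sumL in *; simpl; rewrite IHl; lra. Qed.

End Chunk1.

Section Chunk2.
Local Open Scope R_scope.

Definition nb (G : pgraph) (x p : nat) : nat := fst (pg_nbr G x p).

Lemma wf_port : forall G u p, wf_graph G -> (u < pg_n G)%nat -> (p < pg_deg G u)%nat ->
  (nb G u p < pg_n G)%nat /\ (snd (pg_nbr G u p) < pg_deg G (nb G u p))%nat /\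
  pg_nbr G (nb G u p) (snd (pg_nbr G u p)) = (u, p) /\ nb G u p <> u.
Proof.
  intros G u p [_ [H _]] Hu Hp. specialize (H u p Hu Hp). unfold nb.
  destruct (pg_nbr G u p) as [w q]. simpl. tauto.
Qed.

Lemma wf_deg_le : forall G u, wf_graph G -> (u < pg_n G)%nat -> (pg_deg G u <= pg_n G)%nat.
Proof.
  intros G u HG Hu. apply (inj_bound _ _ (nb G u)).
  - intros i Hi. apply wf_port; auto.
  - intros i j Hi Hj E. destruct HG as [_ [_ [H _]]]. apply (H u); auto.
Qed.

Lemma wf_adj_lt : forall G u y, wf_graph G -> (u < pg_n G)%nat -> adj G u y -> (y < pg_n G)%nat.
Proof. intros G u y HG Hu [p [Hp E]]. subst. apply (wf_port G u p); auto. Qed.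

Lemma wf_deg_pos : forall G x w, wf_graph G -> (x < pg_n G)%nat -> (w < pg_n G)%nat -> x <> w ->
  (1 <= pg_deg G x)%nat.
Proof.
  intros G x w HG Hx Hw Hne. destruct HG as [H1 [H2 [H3 H4]]].
  specialize (H4 x w Hx Hw). apply clos_rt_rt1n in H4. inversion H4; subst.
  - congruence.
  - destruct H as [p [Hp _]]. lia.
Qed.

Fixpoint q (G : pgraph) (w t x : nat) : R :=
  match t with
  | O => if Nat.eq_dec x w then 0 else 1
  | S t' => if Nat.eq_dec x w then 0 else avg (pg_deg G x) (fun p => q G w t' (nb G x p))
  end.

Lemma q_w : forall G w t, q G w t w = 0.
Proof. intros. destruct t; simpl; destruct (Nat.eq_dec w w); congruence. Qed.

Lemma q_bounds : forall G w t x, 0 <= q G w t x <= 1.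
Proof.
  induction t; intros; simpl; destruct (Nat.eq_dec x w); try lra.
  apply avg_bounds. intros; apply IHt.
Qed.

Lemma q_mono : forall G w t x, q G w (S t) x <= q G w t x.
Proof.
  induction t; intros.
  - simpl. destruct (Nat.eq_dec x w). lra. apply avg_bounds. intros. apply (q_bounds G w 0).
  - change (q G w (S (S t)) x) with (if Nat.eq_dec x w then 0 else avg (pg_deg G x) (fun p => q G w (S t) (nb G x p))).
    change (q G w (S t) x) with (if Nat.eq_dec x w then 0 else avg (pg_deg G x) (fun p => q G w t (nb G x p))).
    destruct (Nat.eq_dec x w). lra. apply avg_le. intros; apply IHt.
Qed.

Lemma q_mono_le : forall G w t t' x, (t <= t')%nat -> q G w t' x <= q G w t x.
Proof. intros. induction H. lra. pose proof (q_mono G w m x). lra. Qed.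

Lemma q_mult : forall G w t M, wf_graph G -> (forall y, (y < pg_n G)%nat -> q G w t y <= M) ->
  forall s x, (x < pg_n G)%nat -> q G w (s + t) x <= q G w s x * M.
Proof.
  intros G w t M HG HM. induction s; intros x Hx.
  - simpl. destruct (Nat.eq_dec x w). subst. rewrite q_w. lra. rewrite Rmult_1_l. auto.
  - simpl. destruct (Nat.eq_dec x w). lra.
    rewrite <- avg_scal_r. apply avg_le. intros i Hi. apply IHs. apply wf_port; auto.
Qed.

Lemma q_comp : forall G w y t s x, q G w (s + t) x <= q G y s x + q G w t y.
Proof.
  intros G w y t. induction s; intros x.
  - simpl. destruct (Nat.eq_dec x y). subst. lra. pose proof (q_bounds G w t x). pose proof (q_bounds G w t y). lra.
  - simpl plus. destruct (Nat.eq_dec x w).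
    + subst. rewrite q_w. pose proof (q_bounds G y (S s) w). pose proof (q_bounds G w t y). lra.
    + destruct (Nat.eq_dec x y).
      * subst. simpl. destruct (Nat.eq_dec y y); [|congruence].
        pose proof (q_mono_le G w t (S (s + t)) y ltac:(lia)). simpl in H.
        destruct (Nat.eq_dec y w); [congruence|]. lra.
      * simpl. destruct (Nat.eq_dec x w); [congruence|]. destruct (Nat.eq_dec x y); [congruence|].
        eapply Rle_trans; [|apply avg_plus_const; apply q_bounds].
        apply avg_le. intros. apply IHs.
Qed.

End Chunk2.

Section Chunk3.
Local Open Scope R_scope.

Definition darts (G : pgraph) : list (nat * nat) :=
  flat_map (fun x => map (fun p => (x, p)) (seq 0 (pg_deg G x))) (seq 0 (pg_n G)).

Lemma in_darts : forall G x p, In (x, p) (darts G) <-> (x < pg_n G /\ p < pg_deg G x)%nat.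
Proof.
  intros. unfold darts. rewrite in_flat_map. split.
  - intros [y [Hy Hin]]. apply in_map_iff in Hin. destruct Hin as [p' [E Hp]]. inversion E; subst.
    apply in_seq in Hy. apply in_seq in Hp. lia.
  - intros [Hx Hp]. exists x. split. apply in_seq; lia. apply in_map_iff. exists p. split; auto. apply in_seq; lia.
Qed.

Lemma nodup_fm : forall (g : nat -> nat) l, NoDup l ->
  NoDup (flat_map (fun x => map (fun p => (x, p)) (seq 0 (g x))) l).
Proof.
  induction l; intros H; simpl. constructor. inversion H; subst.
  apply NoDup_app.
  - apply FinFun.Injective_map_NoDup. intros u v E. inversion E; auto. apply seq_NoDup.
  - auto.
  - intros [y p] Hin Hin2. apply in_map_iff in Hin. destruct Hin as [p' [E _]]. inversion E; subst.
    apply in_flat_map in Hin2. destruct Hin2 as [z [Hz Hin]]. apply in_map_iff in Hin.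
    destruct Hin as [p'' [E' _]]. inversion E'; subst. auto.
Qed.

Lemma darts_perm : forall G, wf_graph G ->
  Permutation (map (fun d => pg_nbr G (fst d) (snd d)) (darts G)) (darts G).
Proof.
  intros G HG. apply Permutation_map_same_l.
  - apply FinFun.Injective_map_NoDup_in.
    + intros [x p] [y r] Hx Hy E. simpl in E. apply in_darts in Hx. apply in_darts in Hy.
      destruct (wf_port G x p HG (proj1 Hx) (proj2 Hx)) as [_ [_ [E1 _]]].
      destruct (wf_port G y r HG (proj1 Hy) (proj2 Hy)) as [_ [_ [E2 _]]].
      unfold nb in *. rewrite E in E1. rewrite E1 in E2. auto.
    + apply nodup_fm. apply seq_NoDup.
  - intros d Hd. apply in_map_iff in Hd. destruct Hd as [[x p] [E Hin]]. simpl in E. subst.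
    apply in_darts in Hin. destruct (wf_port G x p HG (proj1 Hin) (proj2 Hin)) as [A [B _]].
    unfold nb in *. destruct (pg_nbr G x p) as [y r]. apply in_darts. simpl in *. auto.
Qed.

Lemma sumL_darts : forall G (H : nat * nat -> R),
  sumL (darts G) H = sumR (pg_n G) (fun x => sumR (pg_deg G x) (fun p => H (x, p))).
Proof.
  intros. unfold darts. rewrite sumL_flat_map, sumL_seq. apply sumR_ext. intros.
  rewrite sumL_map, sumL_seq. auto.
Qed.

Lemma dcount : forall G (F : nat -> R), wf_graph G ->
  sumR (pg_n G) (fun x => sumR (pg_deg G x) (fun p => F (nb G x p))) =
  sumR (pg_n G) (fun x => INR (pg_deg G x) * F x).
Proof.
  intros G F HG.
  rewrite (sumR_ext _ _ (fun x => sumR (pg_deg G x) (fun p => (fun d => F (nb G (fst d) (snd d))) (x, p)))) by reflexivity.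
  rewrite <- (sumL_darts G (fun d => F (nb G (fst d) (snd d)))).
  transitivity (sumL (map (fun d => pg_nbr G (fst d) (snd d)) (darts G)) (fun d => F (fst d))).
  { rewrite sumL_map. auto. }
  rewrite (sumL_perm _ _ _ _ (darts_perm G HG)). rewrite sumL_darts.
  apply sumR_ext. intros. simpl. rewrite (sumR_const _ (F i)). lra.
Qed.

Definition h (G : pgraph) (w t x : nat) : R := sumR t (fun s => q G w s x).

Lemma h_nonneg : forall G w t x, 0 <= h G w t x.
Proof. intros. apply sumR_nonneg. intros. apply q_bounds. Qed.

Lemma h_step : forall G w t x, x <> w ->
  INR (pg_deg G x) * h G w (S t) x = INR (pg_deg G x) + sumR (pg_deg G x) (fun p => h G w t (nb G x p)).
Proof.
  intros. unfold h. rewrite sumR_shift. simpl q at 1. destruct (Nat.eq_dec x w); [congruence|].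
  rewrite (sumR_ext t _ (fun s => sumR (pg_deg G x) (fun p => q G w s (nb G x p)) * / INR (pg_deg G x))).
  2:{ intros. simpl. destruct (Nat.eq_dec x w); [congruence|]. reflexivity. }
  rewrite sumR_scal_r. rewrite sumR_swap.
  destruct (pg_deg G x) as [|d] eqn:E. simpl. lra.
  field. apply not_0_INR. lia.
Qed.

Lemma h_w : forall G w t, h G w t w = 0.
Proof. intros. unfold h. rewrite (sumR_ext _ _ (fun _ => 0)). rewrite sumR_const. lra. intros. apply q_w. Qed.

Definition m2 (G : pgraph) : R := sumR (pg_n G) (fun x => INR (pg_deg G x)).

Lemma hit_bound : forall G w t p, wf_graph G -> (w < pg_n G)%nat -> (p < pg_deg G w)%nat ->
  h G w t (nb G w p) <= m2 G.
Proof.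
  intros G w t p HG Hw Hp.
  set (S t := sumR (pg_n G) (fun x => INR (pg_deg G x) * h G w t x)).
  assert (E : S (Datatypes.S t) = m2 G + S t - INR (pg_deg G w) - sumR (pg_deg G w) (fun p => h G w t (nb G w p))).
  { unfold S. rewrite (sumR_ext _ _ (fun x => if Nat.eq_dec x w then 0 else
        INR (pg_deg G x) + sumR (pg_deg G x) (fun p => h G w t (nb G x p)))).
    2:{ intros. destruct (Nat.eq_dec i w). subst. rewrite h_w. lra. apply h_step; auto. }
    rewrite sumR_except by auto. rewrite sumR_plus. rewrite dcount by auto. unfold m2. lra. }
  assert (Mono : S t <= S (Datatypes.S t)).
  { unfold S. apply sumR_le. intros. apply Rmult_le_compat_l. apply pos_INR.
    unfold h. simpl. pose proof (q_bounds G w t i). lra. }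
  assert (T : h G w t (nb G w p) <= sumR (pg_deg G w) (fun p => h G w t (nb G w p))).
  { apply (sumR_term _ (fun p => h G w t (nb G w p))); auto. intros. apply h_nonneg. }
  pose proof (pos_INR (pg_deg G w)). lra.
Qed.

Lemma q_le_h : forall G w t y, INR t * q G w t y <= h G w t y.
Proof.
  induction t; intros. simpl. unfold h. simpl. lra.
  unfold h. simpl sumR. fold (h G w t y). rewrite S_INR.
  pose proof (q_mono G w t y). pose proof (IHt y). pose proof (q_bounds G w (Datatypes.S t) y).
  pose proof (pos_INR t).
  assert (INR t * q G w (Datatypes.S t) y <= INR t * q G w t y) by (apply Rmult_le_compat_l; auto). lra.
Qed.

Lemma m2_le : forall G, wf_graph G -> m2 G <= INR (pg_n G) * INR (pg_n G).
Proof.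
  intros. unfold m2. rewrite <- sumR_const. apply sumR_le. intros. apply le_INR. apply wf_deg_le; auto.
Qed.

Lemma edge_bound : forall G z p, wf_graph G -> (z < pg_n G)%nat -> (p < pg_deg G z)%nat ->
  q G z (2 * pg_n G ^ 3) (nb G z p) <= / (2 * INR (pg_n G)).
Proof.
  intros G z p HG Hz Hp.
  pose proof (q_le_h G z (2 * pg_n G ^ 3) (nb G z p)) as H.
  pose proof (hit_bound G z (2 * pg_n G ^3) p HG Hz Hp). pose proof (m2_le G HG).
  assert (Hn : 0 < INR (pg_n G)) by (apply lt_0_INR; lia).
  rewrite mult_INR, pow_INR in H. replace (INR 2) with 2 in H by (simpl; lra).
  assert (A: 2 * INR (pg_n G) ^ 3 * q G z (2 * pg_n G ^ 3) (nb G z p) <= INR (pg_n G) * INR (pg_n G)).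
  { eapply Rle_trans. apply H. eapply Rle_trans. apply H0. apply H1. }
  assert (q G z (2 * pg_n G ^ 3) (nb G z p) * (2 * INR (pg_n G) ^ 3) <= INR (pg_n G) * INR (pg_n G)) by lra.
  apply Rmult_le_reg_r with (2 * INR (pg_n G) ^ 3). apply Rmult_lt_0_compat; [lra|apply pow_lt; lra].
  replace (/ (2 * INR (pg_n G)) * (2 * INR (pg_n G) ^ 3)) with (INR (pg_n G) * INR (pg_n G)) by (field; lra). lra.
Qed.

Definition pathf (G : pgraph) (k x w : nat) : Prop :=
  exists f : nat -> nat, f O = x /\ f k = w /\ forall i, (i < k)%nat -> adj G (f i) (f (Datatypes.S i)).

Lemma crt_path : forall G x w, clos_refl_trans nat (adj G) x w -> exists k, pathf G k x w.
Proof.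
  intros G x w H. apply clos_rt_rt1n in H. induction H.
  - exists O, (fun _ => x). repeat split; auto. intros; lia.
  - destruct IHclos_refl_trans_1n as [k [f [F0 [Fk Fa]]]].
    exists (Datatypes.S k), (fun i => match i with O => x | Datatypes.S i' => f i' end).
    repeat split; auto. intros [|i] Hi. rewrite F0; auto. apply Fa; lia.
Qed.

Lemma path_lt : forall G k f, wf_graph G -> (f O < pg_n G)%nat ->
  (forall i, (i < k)%nat -> adj G (f i) (f (Datatypes.S i))) -> forall i, (i <= k)%nat -> (f i < pg_n G)%nat.
Proof.
  intros G k f HG H0 Ha. induction i; intros; auto. apply (wf_adj_lt G (f i)); [auto|apply IHi; lia|apply Ha; lia].
Qed.

Lemma short_path : forall G k x w, wf_graph G -> (x < pg_n G)%nat -> pathf G k x w ->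
  exists k', (k' < pg_n G)%nat /\ pathf G k' x w.
Proof.
  intros G k. induction k as [k IH] using (well_founded_induction lt_wf).
  intros x w HG Hx [f [F0 [Fk Fa]]].
  destruct (lt_dec k (pg_n G)). exists k. split; auto. exists f; auto.
  assert (Hlt : forall i, (i < Datatypes.S k)%nat -> (f i < pg_n G)%nat).
  { intros. apply (path_lt G k); auto. rewrite F0; auto. lia. }
  destruct (php (pg_n G) (Datatypes.S k) f Hlt ltac:(lia)) as [i [j [Hij Hf]]].
  apply (IH (k - (j - i))%nat) with (x:=x) (w:=w); auto. lia.
  exists (fun m => if (m <=? i)%nat then f m else f (m + (j - i))%nat).
  repeat split.
  - simpl. auto.
  - destruct (Nat.leb_spec (k - (j - i)) i).
    + assert (j = k) by lia. subst. replace (k - (k - i))%nat with i by lia. congruence.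
    + replace (k - (j - i) + (j - i))%nat with k by lia. auto.
  - intros m Hm. destruct (Nat.leb_spec m i); destruct (Nat.leb_spec (Datatypes.S m) i).
    + apply Fa; lia.
    + assert (m = i) by lia. subst. rewrite Hf. replace (Datatypes.S i + (j - i))%nat with (Datatypes.S j) by lia. apply Fa; lia.
    + lia.
    + replace (Datatypes.S m + (j - i))%nat with (Datatypes.S (m + (j - i))) by lia. apply Fa; lia.
Qed.

Lemma path_q : forall G w, wf_graph G -> (w < pg_n G)%nat -> forall k f,
  (f O < pg_n G)%nat -> f k = w -> (forall i, (i < k)%nat -> adj G (f i) (f (Datatypes.S i))) ->
  q G w (k * (2 * pg_n G ^ 3)) (f O) <= INR k * / (2 * INR (pg_n G)).
Proof.
  intros G w HG Hw. induction k; intros f H0 Hk Ha.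
  - rewrite Hk. rewrite q_w. simpl. lra.
  - set (tau := (2 * pg_n G ^ 3)%nat).
    replace (Datatypes.S k * tau)%nat with (tau + k * tau)%nat by lia.
    eapply Rle_trans. apply (q_comp G w (f 1%nat) (k * tau) tau (f O)).
    destruct (Ha O ltac:(lia)) as [p [Hp E]].
    destruct (wf_port G (f O) p HG H0 Hp) as [A [B [C _]]]. unfold nb in *. rewrite E in *.
    assert (Eb := edge_bound G (f 1%nat) (snd (pg_nbr G (f O) p)) HG A B). unfold nb in Eb. rewrite C in Eb. cbn [fst] in Eb.
    assert (IHk' := IHk (fun i => f (Datatypes.S i)) A Hk (fun i Hi => Ha (Datatypes.S i) ltac:(lia))).
    cbv beta in IHk'. fold tau in Eb, IHk'. rewrite S_INR. lra.
Qed.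

Lemma q_half : forall G w x T, wf_graph G -> (w < pg_n G)%nat -> (x < pg_n G)%nat ->
  (2 * pg_n G ^ 4 <= T)%nat -> q G w T x <= / 2.
Proof.
  intros G w x T HG Hw Hx HT.
  assert (Hc : clos_refl_trans nat (adj G) x w) by (apply HG; auto).
  destruct (crt_path G x w Hc) as [k Hp].
  destruct (short_path G k x w HG Hx Hp) as [k' [Hk' [f [F0 [Fk Fa]]]]].
  assert (Hq := path_q G w HG Hw k' f ltac:(rewrite F0; auto) Fk Fa). rewrite F0 in Hq.
  assert (Hle : (k' * (2 * pg_n G ^ 3) <= T)%nat).
  { eapply Nat.le_trans; [|apply HT]. replace (2 * pg_n G ^ 4)%nat with (pg_n G * (2 * pg_n G ^ 3))%nat by (simpl; ring).
    apply Nat.mul_le_mono_r. lia. }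
  assert (Hm := q_mono_le G w (k' * (2 * pg_n G ^ 3)) T x Hle).
  assert (Hn : 0 < INR (pg_n G)) by (apply lt_0_INR; lia).
  assert (INR k' <= INR (pg_n G)) by (apply le_INR; lia).
  assert (INR k' * / (2 * INR (pg_n G)) <= / 2).
  { apply Rmult_le_reg_r with (2 * INR (pg_n G)). lra.
    rewrite Rmult_assoc, Rinv_l by lra. field_simplify; lra. }
  lra.
Qed.

Lemma q_decay : forall G w T, wf_graph G -> (w < pg_n G)%nat -> (2 * pg_n G ^ 4 <= T)%nat ->
  forall K x, (x < pg_n G)%nat -> q G w (K * T) x <= (/ 2) ^ K.
Proof.
  intros G w T HG Hw HT. induction K; intros x Hx.
  - simpl pow. apply (q_bounds G w 0 x).
  - replace (Datatypes.S K * T)%nat with (K * T + T)%nat by lia.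
    eapply Rle_trans. apply (q_mult G w T (/ 2) HG); auto. intros. apply q_half; auto.
    simpl. pose proof (IHK x Hx). pose proof (q_bounds G w (K * T) x). nra.
Qed.

End Chunk3.

Section Chunk4.
Local Open Scope R_scope.

Record item := Item { iG : pgraph; iw : nat; ix : nat }.

Definition step (G : pgraph) (x r : nat) : nat :=
  if (pg_deg G x =? 0)%nat then x else nb G x (r mod pg_deg G x).

Fixpoint avoids (G : pgraph) (w x : nat) (s : list nat) : Prop :=
  x <> w /\ match s with [] => True | r :: s' => avoids G w (step G x r) s' end.

Definition goodI (D : nat) (it : item) : Prop :=
  wf_graph (iG it) /\ (ix it < pg_n (iG it))%nat /\ (iw it < pg_n (iG it))%nat /\
  (forall u, (u < pg_n (iG it))%nat -> (1 <= pg_deg (iG it) u)%nat -> Nat.divide (pg_deg (iG it) u) D).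

Definition qI (L : nat) (it : item) : R := q (iG it) (iw it) L (ix it).

Lemma exists_small : forall D f, sumR D f < INR D -> exists r, (r < D)%nat /\ f r < 1.
Proof.
  intros D f H. destruct (classic (exists r, (r < D)%nat /\ f r < 1)) as [|Hn]; auto.
  exfalso. assert (INR D <= sumR D f).
  { rewrite <- (Rmult_1_r (INR D)), <- sumR_const. apply sumR_le. intros i Hi.
    destruct (Rlt_le_dec (f i) 1); auto. exfalso; apply Hn; eauto. }
  lra.
Qed.

Lemma avg_mod : forall d D g, (d > 0)%nat -> Nat.divide d D -> (D > 0)%nat ->
  avg d g = sumR D (fun r => g (r mod d)%nat) / INR D.
Proof.
  intros d D g Hd [k Hk] HD. subst D. rewrite Nat.mul_comm, sumR_mod by auto. unfold avg.
  rewrite mult_INR. field. split; apply not_0_INR; lia.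
Qed.

Lemma sumR_term_L : forall A (l : list A) f a, (forall b, In b l -> 0 <= f b) -> In a l -> f a <= sumL l f.
Proof.
  induction l; intros f x H Hin; simpl in Hin. contradiction. unfold sumL in *; simpl.
  destruct Hin. subst. assert (0 <= fold_right (fun a s => f a + s) 0 l) by
    (apply (sumL_nonneg _ l f); intros; apply H; simpl; auto). lra.
  assert (f x <= fold_right (fun a s => f a + s) 0 l) by (apply IHl; auto; intros; apply H; simpl; auto).
  assert (0 <= f a) by (apply H; simpl; auto). lra.
Qed.

Lemma sumL_scal_r : forall A (l : list A) f c, sumL l f * c = sumL l (fun a => f a * c).
Proof. induction l; intros; unfold sumL in *; simpl. lra. rewrite <- IHl. lra. Qed.

Lemma seq_exists : forall D, (D > 0)%nat -> forall L fam,
  (forall it, In it fam -> goodI D it) -> sumL fam (qI L) < 1 ->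
  exists s, length s = L /\ forall it, In it fam -> ~ avoids (iG it) (iw it) (ix it) s.
Proof.
  intros D HD. induction L; intros fam Hg Hs.
  - exists []. split; auto. intros it Hin [Hne _].
    assert (qI 0 it <= sumL fam (qI 0)).
    { apply sumR_term_L; auto. intros; apply q_bounds. }
    assert (qI 0 it = 1) by (unfold qI; simpl; destruct (Nat.eq_dec (ix it) (iw it)); [congruence|auto]). lra.
  - set (b := fun it => negb (ix it =? iw it)%nat).
    set (fam1 := filter b fam).
    set (mv := fun r it => Item (iG it) (iw it) (step (iG it) (ix it) r)).
    assert (E1 : sumL fam (qI (S L)) = sumL fam1 (fun it => avg (pg_deg (iG it) (ix it)) (fun p => q (iG it) (iw it) L (nb (iG it) (ix it) p)))).
    { unfold fam1. rewrite sumL_filter. apply sumL_ext. intros it Hin. unfold qI, b. simpl.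
      destruct (Nat.eq_dec (ix it) (iw it)); destruct (Nat.eqb_spec (ix it) (iw it)); simpl; congruence. }
    assert (E2 : sumL fam1 (fun it => avg (pg_deg (iG it) (ix it)) (fun p => q (iG it) (iw it) L (nb (iG it) (ix it) p)))
               = sumR D (fun r => sumL (map (mv r) fam1) (qI L)) / INR D).
    { rewrite (sumR_ext D _ (fun r => sumL fam1 (fun it => qI L (mv r it)))) by (intros; apply sumL_map).
      rewrite <- (sumL_sumR_swap _ fam1 D (fun it r => qI L (mv r it))).
      unfold Rdiv. rewrite sumL_scal_r.
      apply sumL_ext.
      - intros it Hin. unfold fam1 in Hin. apply filter_In in Hin. destruct Hin as [Hin Hb].
        destruct (Hg it Hin) as [HG [Hx [Hw Hdiv]]].
        unfold b in Hb. destruct (Nat.eqb_spec (ix it) (iw it)); [discriminate|].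
        assert (Hd := wf_deg_pos _ _ _ HG Hx Hw n).
        rewrite (avg_mod _ D) by (auto; lia || apply Hdiv; auto). unfold Rdiv. f_equal. apply sumR_ext. intros r Hr.
        unfold qI, mv, step. simpl. destruct (Nat.eqb_spec (pg_deg (iG it) (ix it)) 0); [lia|]. auto. }
    rewrite E1, E2 in Hs.
    assert (HD' : 0 < INR D) by (apply lt_0_INR; lia).
    assert (Hs' : sumR D (fun r => sumL (map (mv r) fam1) (qI L)) < INR D).
    { apply Rmult_lt_reg_r with (/ INR D). apply Rinv_0_lt_compat; auto.
      rewrite Rinv_r by lra. exact Hs. }
    destruct (exists_small _ _ Hs') as [r [Hr Hsr]].
    destruct (IHL (map (mv r) fam1)) as [s' [Hl Hav]]; auto.
    { intros it Hin. apply in_map_iff in Hin. destruct Hin as [it0 [E Hin]]. subst.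
      unfold fam1 in Hin. apply filter_In in Hin. destruct Hin as [Hin Hb].
      destruct (Hg it0 Hin) as [HG [Hx [Hw Hdiv]]].
      unfold b in Hb. destruct (Nat.eqb_spec (ix it0) (iw it0)); [discriminate|].
      assert (Hd := wf_deg_pos _ _ _ HG Hx Hw n).
      unfold mv, goodI. simpl. split; [auto|split; [|split; auto]]. unfold step.
      destruct (Nat.eqb_spec (pg_deg (iG it0) (ix it0)) 0); [lia|].
      apply wf_port; auto. apply Nat.mod_upper_bound. lia. }
    exists (r :: s'). split. simpl; auto.
    intros it Hin [Hne Hrest].
    assert (Hin1 : In it fam1). { unfold fam1. apply filter_In. split; auto. unfold b. destruct (Nat.eqb_spec (ix it) (iw it)); auto. }
    apply (Hav (mv r it)). apply in_map; auto. exact Hrest.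
Qed.

End Chunk4.

Section Chunk5.
Local Open Scope bool_scope.
Local Open Scope nat_scope.

Fixpoint alllists (M K : nat) : list (list nat) :=
  match M with
  | O => [[]]
  | S M' => flat_map (fun a => map (cons a) (alllists M' K)) (seq 0 K)
  end.

Lemma alllists_length : forall M K, length (alllists M K) = K ^ M.
Proof.
  induction M; intros; simpl; auto. rewrite (flat_map_constant_length (c := K ^ M)).
  rewrite length_seq; auto. intros. rewrite length_map; auto.
Qed.

Lemma alllists_in : forall M K l, length l = M -> (forall x, In x l -> x < K) -> In l (alllists M K).
Proof.
  induction M; intros K l Hl Hx; destruct l; simpl in *; try lia; auto.
  apply in_flat_map. exists n. split. apply in_seq. specialize (Hx n (or_introl eq_refl)). lia.
  apply in_map. apply IHM; auto.
Qed.

Lemma nth_map_seq : forall (f : nat -> nat) N i, i < N -> nth i (map f (seq 0 N)) 0 = f i.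
Proof.
  intros. rewrite nth_indep with (d' := f 0) by (rewrite length_map, length_seq; auto).
  rewrite map_nth, seq_nth; auto.
Qed.

Lemma in_map_seq_lt : forall (f : nat -> nat) N K, (forall i, i < N -> f i < K) ->
  forall x, In x (map f (seq 0 N)) -> x < K.
Proof. intros. apply in_map_iff in H0. destruct H0 as [i [E Hi]]. subst. apply in_seq in Hi. apply H. lia. Qed.

Definition tab (N n : nat) (dl nl : list nat) : pgraph :=
  PGraph n (fun u => nth u dl 0) (fun u p => let c := nth (u * N + p) nl 0 in (c / N, c mod N)).

Definition agree (G H : pgraph) : Prop :=
  pg_n G = pg_n H /\ (forall u, u < pg_n G -> pg_deg G u = pg_deg H u) /\
  (forall u p, u < pg_n G -> p < pg_deg G u -> pg_nbr G u p = pg_nbr H u p).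

Lemma agree_wf : forall G H, wf_graph G -> agree G H -> wf_graph H.
Proof.
  intros G H HG [En [Ed Eb]]. pose proof HG as HG0. destruct HG0 as [H1 [H2 [H3 H4]]].
  split; [|split; [|split]].
  - lia.
  - intros u p Hu Hp. rewrite <- En in Hu. rewrite <- Ed in Hp by auto. rewrite <- Eb by auto.
    specialize (H2 u p Hu Hp). destruct (pg_nbr G u p) as [w q]. destruct H2 as [A [B [C D]]].
    rewrite <- En, <- Ed, <- Eb by auto. auto.
  - intros u p1 p2 Hu Hp1 Hp2 E. rewrite <- En in Hu. rewrite <- Ed in Hp1, Hp2 by auto.
    rewrite <- !Eb in E by auto. apply (H3 u); auto.
  - intros u w Hu Hw. rewrite <- En in Hu, Hw. specialize (H4 u w Hu Hw).
    apply clos_rt_rt1n in H4. apply clos_rt1n_rt. clear H1 H2 H3.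
    induction H4. constructor.
    assert (y < pg_n G) by (apply (wf_adj_lt G x); auto).
    econstructor 2; [|apply IHclos_refl_trans_1n; auto].
    destruct H0 as [p [Hp E]]. exists p. rewrite <- Ed, <- Eb by auto. auto.
Qed.

Lemma step_lt : forall G x r, wf_graph G -> x < pg_n G -> step G x r < pg_n G.
Proof.
  intros. unfold step. destruct (Nat.eqb_spec (pg_deg G x) 0); auto.
  apply wf_port; auto. apply Nat.mod_upper_bound; auto.
Qed.

Lemma agree_step : forall G H x r, agree G H -> x < pg_n G -> step G x r = step H x r.
Proof.
  intros G H x r [En [Ed Eb]] Hx. unfold step, nb. rewrite <- Ed by auto.
  destruct (Nat.eqb_spec (pg_deg G x) 0); auto. rewrite Eb; auto. apply Nat.mod_upper_bound; auto.
Qed.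

Lemma agree_avoids : forall G H w s x, wf_graph G -> agree G H -> x < pg_n G ->
  avoids H w x s -> avoids G w x s.
Proof.
  intros G H w. induction s; intros x HG Ha Hx [Hne Hr]; split; auto.
  assert (E := agree_step G H x a Ha Hx). rewrite E. apply IHs; auto. rewrite <- E. apply step_lt; auto.
Qed.

Lemma divide_fact : forall N d, 1 <= d -> d <= N -> Nat.divide d (fact N).
Proof.
  induction N; intros. lia. change (fact (S N)) with (S N * fact N). destruct (Nat.eq_dec d (S N)).
  - subst. apply Nat.divide_factor_l.
  - apply Nat.divide_mul_r. apply IHN; lia.
Qed.

Definition canon (N : nat) (G : pgraph) : pgraph :=
  tab N (pg_n G)
    (map (fun u => if u <? pg_n G then pg_deg G u else 0) (seq 0 N))
    (map (fun c => if (c / N <? pg_n G) && (c mod N <? pg_deg G (c / N)) then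
                     fst (pg_nbr G (c / N) (c mod N)) * N + snd (pg_nbr G (c / N) (c mod N)) else 0)
         (seq 0 (N * N))).

Lemma canon_agree : forall N G, wf_graph G -> pg_n G <= N -> agree G (canon N G).
Proof.
  intros N G HG HN. unfold canon, tab. split; [|split]; simpl; auto.
  - intros u Hu. rewrite nth_map_seq by lia. destruct (Nat.ltb_spec u (pg_n G)); lia.
  - intros u p Hu Hp. assert (Hd := wf_deg_le G u HG Hu).
    rewrite nth_map_seq by nia.
    assert (E1 : (u * N + p) / N = u). { rewrite Nat.div_add_l by lia. rewrite Nat.div_small by lia. lia. }
    assert (E2 : (u * N + p) mod N = p). { rewrite Nat.add_comm, Nat.Div0.mod_add. apply Nat.mod_small. lia. }
    rewrite E1, E2. destruct (Nat.ltb_spec u (pg_n G)); [|lia]. destruct (Nat.ltb_spec p (pg_deg G u)); [|lia]. simpl.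
    destruct (wf_port G u p HG Hu Hp) as [A [B _]]. unfold nb in *.
    assert (Hd2 := wf_deg_le G _ HG A).
    destruct (pg_nbr G u p) as [w q]. simpl in *.
    assert (E3 : (w * N + q) / N = w). { rewrite Nat.div_add_l by lia. rewrite Nat.div_small by lia. lia. }
    assert (E4 : (w * N + q) mod N = q). { rewrite Nat.add_comm, Nat.Div0.mod_add. apply Nat.mod_small. lia. }
    rewrite E3, E4. auto.
Qed.

Definition fam (N : nat) : list item :=
  flat_map (fun n =>
  flat_map (fun dl =>
  flat_map (fun nl =>
  flat_map (fun w =>
  map (fun x => Item (tab N n dl nl) w x)
  (seq 0 N)) (seq 0 N)) (alllists (N * N) (N * N))) (alllists N (S N))) (seq 0 (S N)).

Lemma fam_length : forall N, length (fam N) = S N * (S N ^ N * ((N * N) ^ (N * N) * (N * N))).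
Proof.
  intros. unfold fam.
  rewrite (flat_map_constant_length (c := S N ^ N * ((N * N) ^ (N * N) * (N * N)))). rewrite length_seq. auto.
  intros. rewrite (flat_map_constant_length (c := (N * N) ^ (N * N) * (N * N))). rewrite alllists_length. auto.
  intros. rewrite (flat_map_constant_length (c := N * N)). rewrite alllists_length. auto.
  intros. rewrite (flat_map_constant_length (c := N)). rewrite length_seq. auto.
  intros. rewrite length_map, length_seq. auto.
Qed.

Lemma canon_in_fam : forall N G w x, wf_graph G -> pg_n G <= N -> w < pg_n G -> x < pg_n G ->
  In (Item (canon N G) w x) (fam N).
Proof.
  intros N G w x HG HN Hw Hx. unfold fam, canon.
  apply in_flat_map. exists (pg_n G). split. apply in_seq; lia.
  apply in_flat_map. exists (map (fun u => if u <? pg_n G then pg_deg G u else 0) (seq 0 N)). split.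
  { apply alllists_in. rewrite length_map, length_seq; auto.
    apply in_map_seq_lt. intros i Hi. destruct (Nat.ltb_spec i (pg_n G)). pose proof (wf_deg_le G i HG H). lia. lia. }
  apply in_flat_map. exists (map (fun c => if (c / N <? pg_n G) && (c mod N <? pg_deg G (c / N)) then
                     fst (pg_nbr G (c / N) (c mod N)) * N + snd (pg_nbr G (c / N) (c mod N)) else 0)
         (seq 0 (N * N))). split.
  { apply alllists_in. rewrite length_map, length_seq; auto.
    apply in_map_seq_lt. intros c Hc. destruct (Nat.ltb_spec (c / N) (pg_n G)); simpl; [|nia].
    destruct (Nat.ltb_spec (c mod N) (pg_deg G (c / N))); simpl; [|nia].
    destruct (wf_port G _ _ HG H H0) as [A [B _]]. unfold nb in *.
    pose proof (wf_deg_le G _ HG A). nia. }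
  apply in_flat_map. exists w. split. apply in_seq; lia.
  apply in_map. apply in_seq; lia.
Qed.

Definition goodP (N : nat) (it : item) : Prop := goodI (fact N) it /\ pg_n (iG it) <= N.

Definition famG (N : nat) : list item :=
  filter (fun it => if excluded_middle_informative (goodP N it) then true else false) (fam N).

Definition Kf (N : nat) : nat := 2 * N ^ 3 + N * N + 3 * N + 1.
Definition Lf (N : nat) : nat := Kf N * (2 * N ^ 4).

Lemma fam_small : forall N, 1 <= N -> length (fam N) < 2 ^ Kf N.
Proof.
  intros N HN. rewrite fam_length. unfold Kf.
  assert (A : S N <= 2 ^ N) by (apply Nat.pow_gt_lin_r; lia).
  assert (A' : N < 2 ^ N) by (apply Nat.pow_gt_lin_r; lia).
  assert (B : N * N <= 2 ^ (2 * N)).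
  { replace (2 * N) with (N + N) by lia. rewrite Nat.pow_add_r. apply Nat.mul_le_mono; lia. }
  assert (C : S N ^ N <= 2 ^ (N * N)) by (rewrite (Nat.pow_mul_r 2); apply Nat.pow_le_mono_l; auto).
  assert (D : (N * N) ^ (N * N) <= 2 ^ (2 * N * (N * N))) by (rewrite (Nat.pow_mul_r 2); apply Nat.pow_le_mono_l; auto).
  eapply Nat.le_lt_trans.
  apply Nat.mul_le_mono; [apply A|]. apply Nat.mul_le_mono; [apply C|]. apply Nat.mul_le_mono; [apply D|apply B].
  rewrite <- !Nat.pow_add_r. apply Nat.pow_lt_mono_r. lia. simpl. nia.
Qed.

End Chunk5.

Section Chunk6.

Lemma agree_sym : forall G H, agree G H -> agree H G.
Proof.
  intros G H [En [Ed Eb]]. split; [auto|split].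
  - intros u Hu. rewrite <- En in Hu. symmetry; auto.
  - intros u p Hu Hp. rewrite <- En in Hu. rewrite <- Ed in Hp by auto. symmetry; auto.
Qed.

Lemma univ_seq : forall N, 1 <= N -> exists s : list nat, length s = Lf N /\
  forall G v w, wf_graph G -> pg_n G <= N -> v < pg_n G -> w < pg_n G -> ~ avoids G w v s.
Proof.
  intros N HN.
  destruct (seq_exists (fact N) (lt_O_fact N) (Lf N) (famG N)) as [s [Hl Hs]].
  - intros it Hin. unfold famG in Hin. apply filter_In in Hin. destruct Hin as [_ Hb].
    destruct (excluded_middle_informative (goodP N it)) as [[Hg _]|]; [auto|discriminate].
  - eapply Rle_lt_trans.
    + apply (sumL_le _ _ _ (fun _ => (/ 2) ^ Kf N)%R).
      intros it Hin. unfold famG in Hin. apply filter_In in Hin. destruct Hin as [_ Hb].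
      destruct (excluded_middle_informative (goodP N it)) as [[[HG [Hx [Hw _]]] Hn]|]; [|discriminate].
      unfold qI, Lf. apply q_decay; auto. apply Nat.mul_le_mono_l. apply Nat.pow_le_mono_l. auto.
    + rewrite sumL_const.
      assert (H1 : (INR (length (famG N)) < 2 ^ Kf N)%R).
      { eapply Rle_lt_trans. apply le_INR. apply filter_length_le.
        rewrite <- (pow_INR 2). replace (INR 2) with 2%R by (simpl; lra). apply lt_INR. apply fam_small; auto. }
      assert (H2 : ((/ 2) ^ Kf N * 2 ^ Kf N = 1)%R).
      { rewrite <- Rpow_mult_distr. rewrite Rinv_l by lra. apply pow1. }
      assert (H3 : (0 < (/ 2) ^ Kf N)%R) by (apply pow_lt; lra).
      nra.
  - exists s. split; auto. intros G v w HG HN' Hv Hw Hav.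
    assert (Ha := canon_agree N G HG HN').
    apply (Hs (Item (canon N G) w v)).
    + unfold famG. apply filter_In. split. apply canon_in_fam; auto.
      destruct (excluded_middle_informative (goodP N (Item (canon N G) w v))) as [|Hn]; auto.
      exfalso. apply Hn. pose proof Ha as [En [Ed Eb]].
      unfold goodP, goodI. cbn [iG iw ix]. rewrite <- En.
      split; [split; [apply (agree_wf G); auto|split; [auto|split; [auto|]]]|auto].
      intros u Hu Hd. rewrite <- Ed in * by auto. apply divide_fact; auto.
      pose proof (wf_deg_le G u HG Hu). lia.
    + cbn [iG iw ix]. assert (Hw' : wf_graph (canon N G)) by (apply (agree_wf G); auto).
      assert (Hs' := agree_sym _ _ Ha). assert (Hv' : v < pg_n (canon N G)) by (destruct Ha as [En _]; rewrite <- En; auto).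
      apply (agree_avoids (canon N G) G); auto.
Qed.

End Chunk6.

Section Chunk7.

Definition useq (N : nat) : list nat :=
  match le_lt_dec 1 N with
  | left H => proj1_sig (constructive_indefinite_description _ (univ_seq N H))
  | right _ => []
  end.

Lemma useq_spec : forall N, 1 <= N -> length (useq N) = Lf N /\
  forall G v w, wf_graph G -> pg_n G <= N -> v < pg_n G -> w < pg_n G -> ~ avoids G w v (useq N).
Proof.
  intros N HN. unfold useq. destruct (le_lt_dec 1 N); [|lia].
  destruct (constructive_indefinite_description _ (univ_seq N l)) as [s Hs]. simpl. auto.
Qed.

Definition curdeg (d0 : nat) (h : history) : nat := last (map snd h) d0.

Definition runseq (s : list nat) : algorithm := fun adv d0 h =>
  if length h <? length s then
    (let d := curdeg d0 h in if d =? 0 then None else Some (nth (length h) s 0 mod d))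
  else None.

Fixpoint walkpos (G : pgraph) (x : nat) (s : list nat) (i : nat) : nat :=
  match i with O => x | S i' => step G (walkpos G x s i') (nth i' s 0) end.

Lemma walkpos_cons : forall G x r s i, walkpos G x (r :: s) (S i) = walkpos G (step G x r) s i.
Proof. induction i; simpl; auto. Qed.

Lemma not_avoids : forall G w s x, ~ avoids G w x s -> exists i, i <= length s /\ walkpos G x s i = w.
Proof.
  intros G w. induction s; intros x H.
  - exists 0. split; simpl; auto. destruct (Nat.eq_dec x w); auto. exfalso; apply H; split; auto.
  - destruct (Nat.eq_dec x w). exists 0. split; simpl; auto; lia.
    destruct (IHs (step G x a)) as [i [Hi E]].
    { intro Ha. apply H. split; auto. }
    exists (S i). split. simpl; lia. rewrite walkpos_cons. auto.
Qed.

Lemma walkpos_lt : forall G x s i, wf_graph G -> x < pg_n G -> walkpos G x s i < pg_n G.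
Proof. induction i; intros; simpl; auto. apply step_lt; auto. Qed.

Lemma run_cfg : forall G adv s v, wf_graph G -> v < pg_n G -> 2 <= pg_n G ->
  forall i, i <= length s ->
  fst (cfg G (runseq s) adv v i) = walkpos G v s i /\
  length (snd (cfg G (runseq s) adv v i)) = i /\
  curdeg (pg_deg G v) (snd (cfg G (runseq s) adv v i)) = pg_deg G (walkpos G v s i).
Proof.
  intros G adv s v HG Hv H2. induction i; intros Hi.
  - simpl. auto.
  - destruct IHi as [E1 [E2 E3]]; [lia|]. simpl cfg.
    destruct (cfg G (runseq s) adv v i) as [u h] eqn:Ec. simpl in *. subst u.
    assert (Hlt := walkpos_lt G v s i HG Hv).
    assert (Hd : 1 <= pg_deg G (walkpos G v s i)).
    { destruct (Nat.eq_dec (walkpos G v s i) 0).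
      - apply (wf_deg_pos G _ 1); auto; lia.
      - apply (wf_deg_pos G _ 0); auto; lia. }
    unfold runseq. rewrite E2. destruct (Nat.ltb_spec i (length s)); [|lia].
    rewrite E3. destruct (Nat.eqb_spec (pg_deg G (walkpos G v s i)) 0); [lia|].
    set (p := nth i s 0 mod pg_deg G (walkpos G v s i)).
    assert (Hp : p < pg_deg G (walkpos G v s i)) by (apply Nat.mod_upper_bound; lia).
    destruct (Nat.ltb_spec p (pg_deg G (walkpos G v s i))); [|lia].
    destruct (pg_nbr G (walkpos G v s i) p) as [w q] eqn:En. simpl.
    unfold step, nb. destruct (Nat.eqb_spec (pg_deg G (walkpos G v s i)) 0); [lia|]. fold p. rewrite En. simpl.
    split; auto. split. rewrite length_app. simpl. lia.
    unfold curdeg. rewrite map_app. simpl. rewrite last_last. auto.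
Qed.

Lemma run_explores : forall G adv s, wf_graph G -> 0 < length s ->
  (forall v w, v < pg_n G -> w < pg_n G -> ~ avoids G w v s) ->
  forall v, v < pg_n G -> explores_within G (runseq s) adv v (length s).
Proof.
  intros G adv s HG Hs Hav v Hv.
  destruct (le_lt_dec 2 (pg_n G)) as [H2|H1].
  - exists (length s). split; auto. split; [|split].
    + intros i Hi. destruct (run_cfg G adv s v HG Hv H2 i ltac:(lia)) as [E1 [E2 E3]].
      unfold runseq at 1. rewrite E2. destruct (Nat.ltb_spec i (length s)); [|lia]. rewrite E3.
      assert (Hlt := walkpos_lt G v s i HG Hv).
      assert (Hd : 1 <= pg_deg G (walkpos G v s i)).
      { destruct (Nat.eq_dec (walkpos G v s i) 0).
        - apply (wf_deg_pos G _ 1); auto; lia.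
        - apply (wf_deg_pos G _ 0); auto; lia. }
      destruct (Nat.eqb_spec (pg_deg G (walkpos G v s i)) 0); [lia|].
      eexists. split. reflexivity. rewrite E1. apply Nat.mod_upper_bound. lia.
    + destruct (run_cfg G adv s v HG Hv H2 (length s) ltac:(lia)) as [E1 [E2 E3]].
      unfold runseq at 1. rewrite E2. destruct (Nat.ltb_spec (length s) (length s)); [lia|]. auto.
    + intros u Hu. destruct (not_avoids G u s v (Hav v u Hv Hu)) as [i [Hi E]].
      exists i. split; auto. destruct (run_cfg G adv s v HG Hv H2 i Hi) as [E1 _]. congruence.
  - exists 0. split; [lia|]. split; [|split].
    + intros; lia.
    + simpl. unfold runseq. simpl. destruct (Nat.ltb_spec 0 (length s)); [|lia].
      unfold curdeg. simpl. destruct (Nat.eqb_spec (pg_deg G v) 0); auto.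
      exfalso. destruct (wf_port G v 0 HG Hv ltac:(lia)) as [A [_ [_ D]]]. lia.
    + intros u Hu. exists 0. split; auto. simpl. lia.
Qed.

End Chunk7.

Section Chunk8.

Lemma ln2_pos : (0 < ln 2)%R.
Proof. rewrite <- ln_1. apply ln_increasing; lra. Qed.

Lemma lg_le : forall x y, (0 < x)%R -> (x <= y)%R -> (lg x <= lg y)%R.
Proof.
  intros. unfold lg. unfold Rdiv. apply Rmult_le_compat_r. left; apply Rinv_0_lt_compat, ln2_pos.
  destruct H0. left; apply ln_increasing; auto. subst; lra.
Qed.

Lemma lg_lt : forall x y, (0 < x)%R -> (x < y)%R -> (lg x < lg y)%R.
Proof.
  intros. unfold lg. unfold Rdiv. apply Rmult_lt_compat_r. apply Rinv_0_lt_compat, ln2_pos.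
  apply ln_increasing; auto.
Qed.

Lemma lg_pow2 : forall k, lg (INR (2 ^ k)) = INR k.
Proof.
  intros. unfold lg. rewrite pow_INR. replace (INR 2) with 2%R by (simpl; lra).
  rewrite ln_pow by lra. field. apply Rgt_not_eq, ln2_pos.
Qed.

Lemma lg_mult2 : forall x, (0 < x)%R -> lg (2 * x) = (1 + lg x)%R.
Proof.
  intros. unfold lg. rewrite ln_mult by lra. field. apply Rgt_not_eq, ln2_pos.
Qed.

Lemma lg_nat_ge : forall k m, 2 ^ k <= m -> (INR k <= lg (INR m))%R.
Proof.
  intros. rewrite <- lg_pow2. apply lg_le. apply lt_0_INR. pose proof (Nat.pow_nonzero 2 k). lia.
  apply le_INR; auto.
Qed.

Lemma lg_nat_inv : forall k m, 1 <= m -> (INR k <= lg (INR m))%R -> 2 ^ k <= m.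
Proof.
  intros. destruct (le_lt_dec (2 ^ k) m); auto. exfalso.
  assert (lg (INR m) < lg (INR (2 ^ k)))%R. { apply lg_lt. apply lt_0_INR; lia. apply lt_INR; auto. }
  rewrite lg_pow2 in H1. lra.
Qed.

Fixpoint bits (l v : nat) : list bool :=
  match l with O => [] | S l' => (v mod 2 =? 1) :: bits l' (v / 2) end.
Fixpoint bval (l : list bool) : nat :=
  match l with [] => 0 | b :: l' => (if b then 1 else 0) + 2 * bval l' end.

Lemma bits_length : forall l v, length (bits l v) = l.
Proof. induction l; intros; simpl; auto. Qed.

Lemma bval_bits : forall l v, v < 2 ^ l -> bval (bits l v) = v.
Proof.
  induction l; intros v Hv. simpl in *. lia.
  cbn [bits bval]. rewrite Nat.pow_succ_r' in Hv. rewrite IHl. 2:{ apply Nat.Div0.div_lt_upper_bound. lia. }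
  pose proof (Nat.div_mod v 2 ltac:(lia)). pose proof (Nat.mod_upper_bound v 2 ltac:(lia)).
  destruct (Nat.eqb_spec (v mod 2) 1); lia.
Qed.

Definition encode (i : nat) : list bool := bits (Nat.log2 (S i)) (S i - 2 ^ Nat.log2 (S i)).
Definition decode (l : list bool) : nat := 2 ^ length l - 1 + bval l.

Lemma decode_encode : forall i, decode (encode i) = i.
Proof.
  intros. unfold decode, encode. rewrite bits_length.
  pose proof (Nat.log2_spec (S i) ltac:(lia)) as [A B]. simpl in B.
  rewrite bval_bits by lia. lia.
Qed.

Lemma encode_length : forall i, length (encode i) = Nat.log2 (S i).
Proof. intros. unfold encode. apply bits_length. Qed.

Definition idx (B n : nat) : nat := Nat.log2 (Nat.log2 n) / B.
Definition Nfun (B i : nat) : nat := 2 ^ (2 ^ ((i + 1) * B)).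
Definition orc (B : nat) : map_oracle := fun G => encode (idx B (pg_n G)).
Definition alg (B : nat) : algorithm := fun adv d0 h => runseq (useq (Nfun B (decode adv))) adv d0 h.

Lemma cfg_ext : forall G A A' adv v, (forall d0 h, A adv d0 h = A' adv d0 h) ->
  forall k, cfg G A adv v k = cfg G A' adv v k.
Proof. intros. induction k; simpl; auto. rewrite IHk. destruct (cfg G A' adv v k). rewrite H. auto. Qed.

Lemma n_le_N : forall B n, 1 <= B -> 1 <= n -> n <= Nfun B (idx B n).
Proof.
  intros B n HB Hn. unfold Nfun, idx. set (a := Nat.log2 n). set (j := Nat.log2 a).
  assert (H1 : n < 2 ^ S a) by (apply (Nat.log2_spec n); lia).
  assert (H2 : S a <= 2 ^ S j).
  { destruct (Nat.eq_dec a 0). rewrite e. pose proof (Nat.pow_nonzero 2 (S j) ltac:(lia)). lia.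
    pose proof (Nat.log2_spec a ltac:(lia)). unfold j. lia. }
  assert (H3 : S j <= (j / B + 1) * B).
  { pose proof (Nat.mul_succ_div_gt j B ltac:(lia)). lia. }
  assert (2 ^ S a <= 2 ^ (2 ^ ((j / B + 1) * B))).
  { apply Nat.pow_le_mono_r; [lia|]. eapply Nat.le_trans. apply H2. apply Nat.pow_le_mono_r; lia. }
  lia.
Qed.

Lemma N_le_poly : forall B n, 1 <= B -> 2 <= n -> Nfun B (idx B n) <= n ^ (2 ^ B).
Proof.
  intros B n HB Hn. unfold Nfun, idx. set (a := Nat.log2 n). set (j := Nat.log2 a).
  assert (Ha : 1 <= a) by (apply Nat.log2_le_pow2; simpl; lia).
  assert (H1 : 2 ^ a <= n) by (apply (Nat.log2_spec n); lia).
  assert (H2 : 2 ^ j <= a) by (apply (Nat.log2_spec a); lia).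
  assert (H3 : (j / B + 1) * B <= j + B) by (pose proof (Nat.Div0.mul_div_le j B); lia).
  assert (H4 : 2 ^ ((j / B + 1) * B) <= a * 2 ^ B).
  { eapply Nat.le_trans. apply Nat.pow_le_mono_r. lia. apply H3. rewrite Nat.pow_add_r.
    apply Nat.mul_le_mono_r. auto. }
  eapply Nat.le_trans. apply Nat.pow_le_mono_r. lia. apply H4.
  rewrite Nat.pow_mul_r. apply Nat.pow_le_mono_l. auto.
Qed.

Lemma Lf_bound : forall N, 1 <= N -> Lf N <= 14 * N ^ 7.
Proof.
  intros N HN. unfold Lf, Kf.
  assert (N <= N ^ 3) by (simpl; nia). assert (N * N <= N ^ 3) by (simpl; nia). assert (1 <= N ^ 3) by (simpl; nia).
  replace (N ^ 7) with (N ^ 3 * N ^ 4) by (rewrite <- Nat.pow_add_r; auto). nia.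
Qed.

Lemma Lf_pos : forall N, 1 <= N -> 0 < Lf N.
Proof. intros. unfold Lf, Kf. pose proof (Nat.pow_nonzero N 4 ltac:(lia)). nia. Qed.

Lemma part1_poly : forall B, 1 <= B -> poly_explores_map (orc B) (alg B).
Proof.
  intros B HB. exists 14, (2 ^ B * 7). intros G v HG Hv.
  set (N := Nfun B (decode (orc B G))).
  assert (EN : N = Nfun B (idx B (pg_n G))) by (unfold N, orc; rewrite decode_encode; auto).
  assert (Hn1 : 1 <= pg_n G) by apply HG.
  assert (HnN : pg_n G <= N) by (rewrite EN; apply n_le_N; auto).
  destruct (useq_spec N ltac:(lia)) as [Hl Hs].
  assert (Hex : explores_within G (runseq (useq N)) (orc B G) v (length (useq N))).
  { apply run_explores; auto. rewrite Hl. apply Lf_pos. lia.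
    }
  destruct Hex as [t [Ht [H1 [H2 H3]]]].
  assert (Ec : forall k, cfg G (alg B) (orc B G) v k = cfg G (runseq (useq N)) (orc B G) v k).
  { apply cfg_ext. intros. reflexivity. }
  exists t. split; [|split; [|split]].
  - destruct (le_lt_dec 2 (pg_n G)) as [H2n|H1n].
    + rewrite Hl in Ht. eapply Nat.le_trans. apply Ht. eapply Nat.le_trans. apply Lf_bound. lia.
      apply Nat.mul_le_mono_l. rewrite Nat.pow_mul_r. apply Nat.pow_le_mono_l. rewrite EN. apply N_le_poly; auto.
    +
      assert (t = 0).
      { destruct t; auto. exfalso. destruct (H1 0 ltac:(lia)) as [p [_ Hp]]. simpl in Hp.
        destruct (wf_port G v p HG Hv Hp) as [A [_ [_ D]]]. lia. }
      lia.
  - intros i Hi. rewrite Ec. apply H1; auto.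
  - rewrite Ec. apply H2.
  - intros u Hu. destruct (H3 u Hu) as [i [Hi E]]. exists i. rewrite Ec. auto.
Qed.

End Chunk8.

Section Chunk9.

Lemma adv_len : forall b n, 1 <= b -> 2 ^ (2 ^ (2 ^ b)) <= n ->
  (INR (Nat.log2 (S (idx (2 ^ b) n))) + INR b <= 1 + lll n)%R.
Proof.
  intros b n Hb Hn. unfold idx. set (B := 2 ^ b) in *.
  assert (HB : 2 <= B) by (unfold B; apply (Nat.pow_le_mono_r 2 1 b); lia).
  assert (Hn0 : 0 < n) by (pose proof (Nat.pow_nonzero 2 (2 ^ B) ltac:(lia)); lia).
  set (a := Nat.log2 n). set (j := Nat.log2 a). set (i := j / B). set (l := Nat.log2 (S i)).
  assert (Ha : 2 ^ B <= a) by (apply (proj1 (Nat.log2_le_pow2 n (2 ^ B) Hn0)); auto).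
  assert (Ha0 : 0 < a) by (pose proof (Nat.pow_nonzero 2 B ltac:(lia)); lia).
  assert (Hj : B <= j) by (apply (proj1 (Nat.log2_le_pow2 a B Ha0)); auto).
  assert (H2a : 2 ^ a <= n) by (apply (Nat.log2_spec n); auto).
  assert (H2j : 2 ^ j <= a) by (apply (Nat.log2_spec a); auto).
  assert (H2l : 2 ^ l <= S i) by (apply (Nat.log2_spec (S i)); lia).
  assert (Hi : B * S i <= 2 * j) by (pose proof (Nat.Div0.mul_div_le j B); unfold i; lia).
  assert (Hlb : 2 ^ (l + b) <= 2 * j).
  { rewrite Nat.pow_add_r. fold B. eapply Nat.le_trans; [|apply Hi]. rewrite Nat.mul_comm. apply Nat.mul_le_mono_l. auto. }
  assert (R1 := lg_nat_ge _ _ Hlb). rewrite mult_INR in R1. replace (INR 2) with 2%R in R1 by (simpl; lra).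
  assert (Hj0 : (0 < INR j)%R) by (apply lt_0_INR; lia).
  rewrite lg_mult2 in R1 by auto. rewrite plus_INR in R1.
  assert (R2 := lg_nat_ge _ _ H2j). assert (R3 := lg_nat_ge _ _ H2a).
  assert (R4 : (lg (INR j) <= lg (lg (INR a)))%R) by (apply lg_le; auto).
  assert (R5 : (lg (INR a) <= lg (lg (INR n)))%R) by (apply lg_le; auto; apply lt_0_INR; auto).
  assert (R6 : (lg (lg (INR a)) <= lg (lg (lg (INR n))))%R) by (apply lg_le; auto; lra).
  unfold lll. fold a. lra.
Qed.

Lemma floor_ge : forall (z : Z) (r : R), (IZR z <= r)%R -> (z <= floorR r)%Z.
Proof.
  intros z r H. unfold floorR. destruct (base_Int_part r) as [A B].
  assert (IZR z < IZR (Int_part r) + 1)%R by lra.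
  rewrite <- plus_IZR in H0. apply lt_IZR in H0. lia.
Qed.

Lemma part1 : forall c : R, (0 < c)%R ->
  exists (f : map_oracle) (A : algorithm) (N0 : nat),
    (forall G, wf_graph G -> N0 <= pg_n G ->
       (Z.of_nat (length (f G)) <= floorR (lll (pg_n G) - c)%R)%Z) /\
    poly_explores_map f A.
Proof.
  intros c Hc. destruct (INR_archimed 1 (c + 1) ltac:(lra)) as [b Hb]. rewrite Rmult_1_r in Hb.
  assert (Hb1 : 1 <= b). { destruct b. simpl in Hb. lra. lia. }
  exists (orc (2 ^ b)), (alg (2 ^ b)), (2 ^ (2 ^ (2 ^ b))). split.
  - intros G HG HN. unfold orc. rewrite encode_length. apply floor_ge.
    rewrite <- INR_IZR_INZ. pose proof (adv_len b (pg_n G) Hb1 HN). lra.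
  - apply part1_poly. pose proof (Nat.pow_nonzero 2 b ltac:(lia)). lia.
Qed.

End Chunk9.

Section Chunk10.

Definition sc (n u : nat) : nat := if u + 1 =? n then 0 else u + 1.
Definition pc (n u : nat) : nat := if u =? 0 then n - 1 else u - 1.

Definition ring (n : nat) : pgraph :=
  PGraph n (fun _ => 2) (fun u p => if p =? 0 then (sc n u, 1) else (pc n u, 0)).

Ltac dsc := unfold sc, pc in *; repeat match goal with
  | |- context [?a =? ?b] => destruct (Nat.eqb_spec a b)
  | H : context [?a =? ?b] |- _ => destruct (Nat.eqb_spec a b)
  end.

Lemma ring_adj_succ : forall n x, 3 <= n -> x < n -> adj (ring n) x (sc n x).
Proof. intros. exists 0. simpl. split; [lia|auto]. Qed.

Lemma ring_wf : forall n, 3 <= n -> wf_graph (ring n).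
Proof.
  intros n Hn. split; [|split; [|split]]; simpl.
  - lia.
  - intros u p Hu Hp. destruct (Nat.eqb_spec p 0).
    + subst. simpl. dsc; repeat split; try lia; f_equal; lia.
    + assert (p = 1) by lia. subst. simpl. dsc; repeat split; try lia; f_equal; lia.
  - intros u p1 p2 Hu Hp1 Hp2 E.
    destruct (Nat.eqb_spec p1 0); destruct (Nat.eqb_spec p2 0); simpl in E; try lia; dsc; lia.
  - assert (Up : forall d u, u + d < n -> clos_refl_trans nat (adj (ring n)) u (u + d)).
    { induction d; intros u Hud. rewrite Nat.add_0_r. apply rt_refl.
      eapply rt_trans. apply rt_step. apply (ring_adj_succ n u Hn). lia.
      replace (sc n u) with (u + 1) by (dsc; lia).
      replace (u + S d) with ((u + 1) + d) by lia. apply IHd. lia. }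
    intros u w Hu Hw. destruct (le_lt_dec u w).
    + replace w with (u + (w - u)) by lia. apply Up. lia.
    + eapply rt_trans. replace (n - 1) with (u + (n - 1 - u)) by lia. apply (Up (n - 1 - u) u). lia.
      replace (u + (n - 1 - u)) with (n - 1) by lia.
      eapply rt_trans. apply rt_step. apply (ring_adj_succ n (n - 1)); lia.
      replace (sc n (n - 1)) with 0 by (dsc; lia).
      replace w with (0 + w) by lia. apply Up. lia.
Qed.

Fixpoint RH (A : algorithm) (adv : list bool) (k : nat) : history :=
  match k with
  | O => []
  | S k' => let h := RH A adv k' in
            match A adv 2 h with
            | Some p => if p <? 2 then h ++ [(p, if p =? 0 then 1 else 0, 2)] else h
            | None => h
            end
  end.

Lemma ring_hist : forall n A adv v k, snd (cfg (ring n) A adv v k) = RH A adv k.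
Proof.
  intros. induction k; simpl; auto. destruct (cfg (ring n) A adv v k) as [u h]. simpl in *. subst.
  destruct (A adv 2 (RH A adv k)) as [p|]; auto. destruct (p <? 2); auto.
  destruct (p =? 0); simpl; auto.
Qed.

Lemma stop_le : forall A adv t t', A adv 2 (RH A adv t) = None ->
  (forall i, i < t' -> exists p, A adv 2 (RH A adv i) = Some p) -> t' <= t.
Proof.
  intros. destruct (le_lt_dec t' t); auto. destruct (H0 t l) as [p E]. congruence.
Qed.

Fixpoint blk (k : nat) : list (list bool) :=
  match k with O => [[]] | S k' => map (cons true) (blk k') ++ map (cons false) (blk k') end.
Definition ble (m : nat) : list (list bool) := flat_map blk (seq 0 (S m)).

Lemma blk_length : forall k, length (blk k) = 2 ^ k.
Proof. induction k; simpl; auto. rewrite length_app, !length_map. lia. Qed.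

Lemma blk_in : forall l, In l (blk (length l)).
Proof.
  induction l; simpl; auto. apply in_or_app. destruct a; [left|right]; apply in_map; auto.
Qed.

Lemma ble_length : forall m, length (ble m) < 2 ^ S m.
Proof.
  induction m. simpl. auto. unfold ble in *. rewrite (seq_S (S m)), flat_map_app, length_app.
  cbn [flat_map]. rewrite app_nil_r, blk_length. rewrite Nat.add_0_l. rewrite (Nat.pow_succ_r' 2 (S m)). lia.
Qed.

Lemma count_blists : forall (L : list (list bool)) m, NoDup L -> (forall x, In x L -> length x <= m) ->
  length L <= 2 ^ S m.
Proof.
  intros. assert (length L <= length (ble m)).
  { apply NoDup_incl_length; auto. intros x Hx. unfold ble. apply in_flat_map. exists (length x).
    split. apply in_seq. specialize (H0 x Hx). lia. apply blk_in. }
  pose proof (ble_length m). lia.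
Qed.

Lemma lll_tower : forall x, lll (2 ^ (2 ^ x)) = lg (INR x).
Proof. intros. unfold lll. rewrite lg_pow2, lg_pow2. auto. Qed.

End Chunk10.

Section Chunk11.

Lemma same_adv : forall (f : instance_oracle) A C k,
  (forall G v, wf_graph G -> v < pg_n G -> explores_within G A (f G v) v (C * pg_n G ^ k)) ->
  forall n m, 3 <= n -> 3 <= m -> f (ring n) 0 = f (ring m) 0 -> m <= C * n ^ k + 1.
Proof.
  intros f A C k Hpe n m Hn Hm E.
  destruct (Hpe (ring n) 0 (ring_wf n Hn) ltac:(simpl; lia)) as [tn [Htn [Hvn [Hsn Hcn]]]].
  destruct (Hpe (ring m) 0 (ring_wf m Hm) ltac:(simpl; lia)) as [tm [Htm [Hvm [Hsm Hcm]]]].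
  simpl pg_n in *. rewrite ring_hist in Hsn. simpl pg_deg in Hsn.
  assert (Hle : tm <= tn).
  { apply (stop_le A (f (ring n) 0)); auto. intros i Hi. destruct (Hvm i Hi) as [p [Ep _]].
    rewrite ring_hist in Ep. simpl pg_deg in Ep. rewrite E. eauto. }
  assert (Hc : m <= S tm).
  { apply (cover_bound m tm (fun i => fst (cfg (ring m) A (f (ring m) 0) 0 i))). auto. }
  lia.
Qed.

Lemma pow_tower_ge : forall x, x < 2 ^ (2 ^ x).
Proof.
  intros. pose proof (Nat.pow_gt_lin_r 2 x ltac:(lia)). pose proof (Nat.pow_gt_lin_r 2 (2 ^ x) ltac:(lia)). lia.
Qed.

Lemma lower_inst : forall phi : nat -> nat, tends_to_infty phi ->
  forall (f : instance_oracle) (A : algorithm),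
    (exists N0, forall G v, wf_graph G -> v < pg_n G -> N0 <= pg_n G ->
       (INR (length (f G v)) <= lll (pg_n G) - INR (phi (pg_n G)))%R) ->
    ~ poly_explores_inst f A.
Proof.
  intros phi Hphi f A [N0 HN0] [C [k Hpe]].
  set (e := k + 1). set (P := e + 2).
  destruct (Hphi P) as [NP HNP].
  set (s := N0 + NP + C + 3).
  set (nj := fun j => 2 ^ (2 ^ (s + e * j))).
  set (adv := fun n => f (ring n) 0).
  assert (He : k + 1 < 2 ^ e) by (apply Nat.pow_gt_lin_r; lia).
  assert (Hnj : forall j, s < nj j).
  { intros. unfold nj. pose proof (pow_tower_ge s).
    assert (2 ^ (2 ^ s) <= 2 ^ (2 ^ (s + e * j))) by (apply Nat.pow_le_mono_r; [lia|]; apply Nat.pow_le_mono_r; lia). lia. }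
  assert (Hdist : forall j1 j2, j1 < j2 -> adv (nj j1) <> adv (nj j2)).
  { intros j1 j2 Hj E. pose proof (same_adv f A C k Hpe (nj j1) (nj j2)) as Hs.
    specialize (Hnj j1) as H1. specialize (Hnj j2) as H2.
    assert (Hle : nj j2 <= C * nj j1 ^ k + 1) by (apply Hs; auto; lia).
    assert (Hge : nj j1 ^ (2 ^ e) <= nj j2).
    { unfold nj. rewrite <- Nat.pow_mul_r. apply Nat.pow_le_mono_r; [lia|].
      rewrite <- Nat.pow_add_r. apply Nat.pow_le_mono_r; nia. }
    assert (Hge2 : nj j1 ^ (k + 1) <= nj j1 ^ (2 ^ e)) by (apply Nat.pow_le_mono_r; lia).
    rewrite Nat.pow_add_r, Nat.pow_1_r in Hge2.
    assert (1 <= nj j1 ^ k) by (pose proof (Nat.pow_nonzero (nj j1) k ltac:(lia)); lia).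
    assert (C + 3 <= nj j1) by (unfold s in H1; lia).
    nia. }
  set (X := s + e * s).
  assert (Hlen : forall j, j <= s -> length (adv (nj j)) + P <= Nat.log2 X).
  { intros j Hj. assert (Hn3 : 3 <= nj j) by (specialize (Hnj j); unfold s in *; lia).
    specialize (HN0 (ring (nj j)) 0 (ring_wf _ Hn3) ltac:(simpl; lia) ltac:(simpl; specialize (Hnj j); unfold s in *; lia)).
    simpl pg_n in HN0. unfold nj in HN0 at 2 3. rewrite lll_tower in HN0.
    assert (HP : P <= phi (nj j)) by (apply HNP; specialize (Hnj j); unfold s in *; lia).
    apply le_INR in HP. fold (adv (nj j)) in HN0.
    assert (R : (INR (length (adv (nj j)) + P) <= lg (INR (s + e * j)))%R) by (rewrite plus_INR; unfold nj in *; lra).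
    apply lg_nat_inv in R; [|lia].
    apply Nat.log2_le_pow2; [unfold X, s; lia|]. unfold X. eapply Nat.le_trans. apply R. nia. }
  set (Lst := map (fun j => adv (nj j)) (seq 0 (S s))).
  assert (HND : NoDup Lst).
  { apply FinFun.Injective_map_NoDup_in; [|apply seq_NoDup].
    intros x y Hx Hy E. apply in_seq in Hx. apply in_seq in Hy.
    destruct (lt_eq_lt_dec x y) as [[Hlt|Heq]|Hgt]; auto.
    - exfalso. apply (Hdist x y Hlt E).
    - exfalso. apply (Hdist y x Hgt). auto. }
  assert (HP0 := Hlen 0 ltac:(lia)).
  assert (Hcnt : length Lst <= 2 ^ S (Nat.log2 X - P)).
  { apply count_blists; auto. intros x Hx. unfold Lst in Hx. apply in_map_iff in Hx.
    destruct Hx as [j [Ex Hj]]. subst. apply in_seq in Hj. specialize (Hlen j ltac:(lia)). lia. }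
  unfold Lst in Hcnt. rewrite length_map, length_seq in Hcnt.
  assert (HX : 2 ^ Nat.log2 X <= X) by (apply Nat.log2_spec; unfold X, s; lia).
  assert (E2 : 2 ^ S (Nat.log2 X - P) * 2 ^ (e + 1) = 2 ^ Nat.log2 X).
  { rewrite <- Nat.pow_add_r. f_equal. unfold P in *. lia. }
  assert (He2 : 2 * (e + 1) <= 2 ^ (e + 1)).
  { rewrite Nat.pow_add_r. pose proof (Nat.pow_gt_lin_r 2 e ltac:(lia)). simpl. lia. }
  assert (S s * (2 * (e + 1)) <= X).
  { eapply Nat.le_trans. apply Nat.mul_le_mono; [apply Hcnt|apply He2]. lia. }
  unfold X in H. nia.
Qed.

Lemma lower_map : forall phi : nat -> nat, tends_to_infty phi ->
  forall (f : map_oracle) (A : algorithm),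
    (exists N0, forall G, wf_graph G -> N0 <= pg_n G ->
       (INR (length (f G)) <= lll (pg_n G) - INR (phi (pg_n G)))%R) ->
    ~ poly_explores_map f A.
Proof.
  intros phi Hphi f A [N0 HN0] Hp.
  apply (lower_inst phi Hphi (fun G _ => f G) A).
  - exists N0. intros. apply HN0; auto.
  - destruct Hp as [C [k H]]. exists C, k. intros. apply H; auto.
Qed.

End Chunk11.

Theorem mainTheorem3 :
  (* (i) upper bound, map oracles *)
  (forall c : R, (0 < c)%R ->
     exists (f : map_oracle) (A : algorithm) (N0 : nat),
       (forall G, wf_graph G -> N0 <= pg_n G ->
          (Z.of_nat (length (f G)) <= floorR (lll (pg_n G) - c)%R)%Z) /\
       poly_explores_map f A) /\
  (* (ii) lower bound, instance oracles *)
  (forall phi : nat -> nat, tends_to_infty phi ->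
     forall (f : instance_oracle) (A : algorithm),
       (exists N0, forall G v, wf_graph G -> v < pg_n G -> N0 <= pg_n G ->
          (INR (length (f G v)) <= lll (pg_n G) - INR (phi (pg_n G)))%R) ->
       ~ poly_explores_inst f A) /\
  (* (ii) hence also for map oracles *)
  (forall phi : nat -> nat, tends_to_infty phi ->
     forall (f : map_oracle) (A : algorithm),
       (exists N0, forall G, wf_graph G -> N0 <= pg_n G ->
          (INR (length (f G)) <= lll (pg_n G) - INR (phi (pg_n G)))%R) ->
       ~ poly_explores_map f A).
Proof.
  split; [exact part1|split; [exact lower_inst|exact lower_map]].
Qed.
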